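(* For every integer $t\geq 2$ there exist a connected graph $G$ and a function $g:A\to B$ such that $fix(G)-fix(F_G)=t$.
   Context: A set $S\subseteq V(H)$ is a fixing set of a graph $H$ if the only automorphism of $H$ fixing every vertex of $S$ is the identity; $fix(H)$ is the minimum cardinality of a fixing set of $H$. Functigraph: let $G_1,G_2$ be disjoint copies of a connected graph $G$, with $A=V(G_1)$, $B=V(G_2)$, and let $g:A\to B$ be a function. The functigraph $F_G$ has vertex set $A\cup B$ and edge set $E(G_1)\cup E(G_2)\cup\{ug(u):u\in A\}$. *)

(* Defs.v *)
From mathcomp Require Import all_boot all_fingroup.
Set Implicit Arguments. Unset Strict Implicit. Unset Printing Implicit Defensive.

Definition simple_graph (T : finType) (e : rel T) : Prop :=
  symmetric e /\ irreflexive e.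

Definition connected_graph (T : finType) (e : rel T) : Prop :=
  0 < #|T| /\ forall x y : T, connect e x y.

Definition is_aut (T : finType) (e : rel T) (s : {perm T}) : bool :=
  [forall x, forall y, e (s x) (s y) == e x y].

Definition fixing_set (T : finType) (e : rel T) (S : {set T}) : bool :=
  [forall s : {perm T}, (is_aut e s && [forall x in S, s x == x]) ==> (s == 1%g)].

Lemma fixing_setT (T : finType) (e : rel T) : fixing_set e [set: T].
Proof.
apply/forallP => s; apply/implyP => /andP [_ /forallP H].
apply/eqP/permP => x; rewrite perm1; exact/eqP/(implyP (H x))/in_setT.
Qed.

Definition fix_number (T : finType) (e : rel T) : nat :=
  #|[arg min_(S < [set: T] | fixing_set e S) #|S|]|.

(* Functigraph F_G: vertices A = inl, B = inr (two copies of T);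
   edges E(G1) u E(G2) u {u g(u) : u in A}. *)
Definition functigraph (T : finType) (e : rel T) (g : T -> T) : rel (T + T) :=
  fun a b =>
    match a, b with
    | inl x, inl y => e x y
    | inr x, inr y => e x y
    | inl x, inr y => g x == y
    | inr y, inl x => g x == y
    end.

(* Main.v *)
Require Import Defs.
From mathcomp Require Import all_boot all_fingroup zify.
Set Implicit Arguments. Unset Strict Implicit. Unset Printing Implicit Defensive.

Definition deg (T : finType) (r : rel T) (x : T) := #|[set y | r x y]|.

Lemma aut_adj (T : finType) (r : rel T) (s : {perm T}) x y :
  is_aut r s -> r (s x) (s y) = r x y.
Proof. by move=> /forallP /(_ x) /forallP /(_ y) /eqP. Qed.

Lemma aut_deg (T : finType) (r : rel T) (s : {perm T}) x :
  is_aut r s -> deg r (s x) = deg r x.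
Proof.
move=> Ha; rewrite /deg.
have -> : [set y | r (s x) y] = s @: [set y | r x y].
  apply/setP => y; rewrite inE.
  apply/idP/imsetP.
  - move=> H; exists ((s^-1)%g y); last by rewrite permKV.
    by rewrite inE -(aut_adj _ _ Ha) permKV.
  - by case=> z; rewrite inE => Hz ->; rewrite aut_adj.
by rewrite card_imset //; apply: perm_inj.
Qed.

Lemma DL (T : finType) (r : rel T) (s : {perm T}) u v :
  is_aut r s -> s u = u -> r u v ->
  (forall w, r u w -> w != v -> s w = w \/ deg r w != deg r v) -> s v = v.
Proof.
move=> Ha Hu Huv H.
have Hw : r u (s v) by rewrite -{1}Hu aut_adj.
case: (eqVneq (s v) v) => // Hne.
case: (H _ Hw Hne) => [Hf|Hd].
- by move/perm_inj: Hf => Hf; rewrite Hf eqxx in Hne.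
- by move: Hd; rewrite aut_deg // eqxx.
Qed.

Lemma anchor (T : finType) (r : rel T) (s : {perm T}) v :
  is_aut r s -> (forall w, w != v -> deg r w != deg r v) -> s v = v.
Proof.
move=> Ha H; case: (eqVneq (s v) v) => // Hne.
by move: (H _ Hne); rewrite aut_deg // eqxx.
Qed.

Lemma twin_aut (T : finType) (r : rel T) x y :
  (forall z, r x z = r y z) -> (forall z, r z x = r z y) ->
  is_aut r (tperm x y).
Proof.
move=> H1 H2.
have L1 : forall a c, r (tperm x y a) c = r a c.
  move=> a c; case: tpermP => [->|->|//]; by rewrite H1.
have L2 : forall a c, r c (tperm x y a) = r c a.
  move=> a c; case: tpermP => [->|->|//]; by rewrite H2.
by apply/forallP => a; apply/forallP => b; rewrite L1 L2.
Qed.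

Lemma fix_number_eq (T : finType) (r : rel T) k (S0 : {set T}) :
  fixing_set r S0 -> #|S0| = k ->
  (forall S, fixing_set r S -> k <= #|S|) -> fix_number r = k.
Proof.
move=> H0 Hk Hl; rewrite /fix_number.
case: arg_minnP; first exact: fixing_setT.
move=> S HS Hm; have := Hm _ H0; have := Hl _ HS; rewrite Hk.
move=> a b; apply/eqP; rewrite eqn_leq; by rewrite a b.
Qed.

Lemma card_sumset (A B : finType) (P : pred (A + B)) :
  #|[set z | P z]| = #|[set a | P (inl a)]| + #|[set b | P (inr b)]|.
Proof.
have -> : [set z | P z] = inl @: [set a | P (inl a)] :|: inr @: [set b | P (inr b)].
  apply/setP => z; rewrite !inE; case: z => [a|b].
  - rewrite (mem_imset (f:=inl)) /=; last exact: inl_inj.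
    rewrite inE; apply/esym/orb_idr => /imsetP [? _ //].
  - rewrite (mem_imset (f:=inr)) /=; last exact: inr_inj.
    rewrite inE; apply/esym/orb_idl => /imsetP [? _ //].
rewrite cardsU !card_imset; try (by move=> ? ? []).
suff -> : inl @: [set a | P (inl a)] :&: inr @: [set b | P (inr b)] = set0 by rewrite cards0 subn0.
apply/setP => z; rewrite !inE; apply/negbTE; apply/negP => /andP [/imsetP [a _ ->] /imsetP [b _ //]].
Qed.


Lemma card_ord1 k (P : pred 'I_k) c : c < k -> (forall a : 'I_k, a < k -> P a = (nat_of_ord a == c)) ->
  #|[set a | P a]| = 1.
Proof.
move=> Hc H; have -> : [set a | P a] = [set Ordinal Hc].
  by apply/setP => a; rewrite !inE H // -val_eqE.
exact: cards1.
Qed.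

Lemma card_ord2 k (P : pred 'I_k) c1 c2 : c1 < k -> c2 < k -> c1 != c2 ->
  (forall a : 'I_k, a < k -> P a = (nat_of_ord a == c1) || (nat_of_ord a == c2)) ->
  #|[set a | P a]| = 2.
Proof.
move=> H1 H2 Hn H; have -> : [set a | P a] = [set Ordinal H1; Ordinal H2].
  by apply/setP => a; rewrite !inE H // -!val_eqE.
by rewrite cards2 -val_eqE /= Hn.
Qed.

Lemma card_none (k : finType) (P : pred k) : (forall a, P a = false) -> #|[set a | P a]| = 0.
Proof. move=> H; have -> : [set a | P a] = set0 by apply/setP => a; rewrite !inE H. exact: cards0. Qed.

Lemma card_all k (P : pred 'I_k) : (forall a, P a = true) -> #|[set a | P a]| = k.
Proof. move=> H; have -> : [set a | P a] = setT by apply/setP => a; rewrite !inE H. by rewrite cardsT card_ord. Qed.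

Lemma inord_eqn n k (i : 'I_n.+1) : k <= n -> (inord k == i) = (k == i).
Proof. by move=> H; rewrite -val_eqE /= inordK. Qed.

Lemma sEll (A B : eqType) (a b : A) : (inl a == inl b :> A + B) = (a == b).
Proof. by apply/eqP/eqP => [[]|->]. Qed.
Lemma sErr (A B : eqType) (a b : B) : (inr a == inr b :> A + B) = (a == b).
Proof. by apply/eqP/eqP => [[]|->]. Qed.
Lemma sElr (A B : eqType) (a : A) (b : B) : (inl a == inr b :> A + B) = false.
Proof. by apply/eqP. Qed.
Lemma sErl (A B : eqType) (a : A) (b : B) : (inr b == inl a :> A + B) = false.
Proof. by apply/eqP. Qed.
Definition sE := (sEll, sErr, sElr, sErl).

Definition VG (t : nat) : finType := ('I_(t.+3) + 'I_(t.+1))%type.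

Definition eG t : rel (VG t) := fun x y =>
  match x, y with
  | inl i, inl j => (i.+1 == j) || (j.+1 == i)
  | inl i, inr _ => (i : nat) == 0
  | inr _, inl j => (j : nat) == 0
  | inr _, inr _ => false
  end.

Arguments eG : clear implicits.

Definition gG t (x : VG t) : VG t :=
  match x with
  | inl i => if (0 < i) && (i <= t.+1) then inr (inord i.-1) else inl ord_max
  | inr j => inl (inord j.+1)
  end.

Definition dG t (x : VG t) : nat :=
  match x with
  | inl i => if (i : nat) == 0 then t.+2 else if i <= t.+1 then 2 else 1
  | inr _ => 1
  end.

Definition fibv t (x : VG t) : nat :=
  match x with
  | inl i => if (i : nat) == 0 then 0 else if i <= t.+1 then 1 else 2
  | inr _ => 1
  end.

Lemma degG (t : nat) (x : VG t) : deg (eG t) x = dG x.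
Proof.
rewrite /deg card_sumset /=; case: x => [[i Hi]|[j Hj]] /=.
- case: ifP => H0.
  + have -> : #|[set a : 'I_t.+3 | (i.+1 == a) || (a.+1 == i)]| = 1.
      by apply: (@card_ord1 _ _ 1) => // a ?; lia.
    by rewrite card_all // H0.
  + rewrite [X in _ + X]card_none // addn0.
    case: ifP => H1.
    * by apply: (@card_ord2 _ _ i.-1 i.+1) => *; simpl in *; lia.
    * by apply: (@card_ord1 _ _ i.-1) => *; simpl in *; lia.
- have -> : #|[set a : 'I_t.+3 | a == 0 :> nat]| = 1.
    by apply: (@card_ord1 _ _ 0) => // a ?; lia.
  by rewrite card_none.
Qed.

Lemma fibG (t : nat) (y : VG t) : #|[set x | gG x == y]| = fibv y.
Proof.
rewrite card_sumset; case: y => [[i Hi]|[j Hj]].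
- have E1 : forall a : 'I_(t.+3), (gG (inl a) == inl (Ordinal Hi) :> VG t) =
     ((nat_of_ord a == 0) || (nat_of_ord a == t.+2)) && (i == t.+2).
    move=> a; have Ha := ltn_ord a; rewrite /gG.
    case: ifP => H; rewrite !sE; first lia.
    rewrite -val_eqE /=; lia.
  have E2 : forall b : 'I_(t.+1), (gG (inr b) == inl (Ordinal Hi) :> VG t) = (b.+1 == i).
    move=> b; have Hb := ltn_ord b; rewrite /gG sEll inord_eqn //; lia.
  set X1 := #|_|; set X2 := #|_|.
  rewrite /fibv /=.
  case H0: (i == 0).
  + rewrite /X1 /X2 !card_none // => a; rewrite ?E1 ?E2; lia.
  + case H1: (i <= t.+1).
    * rewrite /X1 /X2 card_none; last by move=> a; rewrite E1; lia.
      apply: (@card_ord1 _ _ i.-1) => [|a ?]; [lia | rewrite E2; lia].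
    * rewrite /X1 /X2 (@card_ord2 _ _ 0 t.+2) //; last by move=> a ?; rewrite E1; lia.
      rewrite card_none // => a; rewrite E2; have := ltn_ord a; lia.
- have E1 : forall a : 'I_(t.+3), (gG (inl a) == inr (Ordinal Hj) :> VG t) =
     (nat_of_ord a == j.+1).
    move=> a; have Ha := ltn_ord a; rewrite /gG.
    case: ifP => H; rewrite !sE; last lia.
    rewrite -val_eqE /= inordK; lia.
  set X1 := #|_|; set X2 := #|_|.
  rewrite /X1 /X2 (@card_ord1 _ _ j.+1); last (by move=> a ?; rewrite E1; lia); last lia.
  by rewrite card_none // => b; rewrite /gG sE.
Qed.

Definition VF t : finType := (VG t + VG t)%type.
Definition FG t : rel (VF t) := functigraph (eG t) (@gG t).
Arguments FG : clear implicits.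

Definition dF t (z : VF t) : nat :=
  match z with inl x => dG x + 1 | inr y => dG y + fibv y end.

Lemma degF (t : nat) (z : VF t) : deg (FG t) z = dF z.
Proof.
rewrite /deg card_sumset; case: z => [x|y] /=.
- rewrite -degG /deg.
  have -> : [set b | FG t (inl x) (inr b)] = [set gG x].
    by apply/setP => b; rewrite !inE /FG /= eq_sym.
  by rewrite cards1.
- rewrite -fibG -degG /deg addnC.
  congr (_ + _); apply: eq_card => a; by rewrite !inE.
Qed.

Section Adj.
Variable t : nat.
Lemma Fll (x y : VG t) : FG t (inl x) (inl y) = eG t x y. Proof. by []. Qed.
Lemma Flr (x y : VG t) : FG t (inl x) (inr y) = (gG x == y). Proof. by []. Qed.
Lemma Frl (x y : VG t) : FG t (inr y) (inl x) = (gG x == y). Proof. by []. Qed.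
Lemma Frr (x y : VG t) : FG t (inr x) (inr y) = eG t x y. Proof. by []. Qed.
Lemma ePP (i j : 'I_(t.+3)) : eG t (inl i) (inl j) = (i.+1 == j) || (j.+1 == i). Proof. by []. Qed.
Lemma ePW (i : 'I_(t.+3)) (j : 'I_(t.+1)) : eG t (inl i) (inr j) = (i == 0 :> nat). Proof. by []. Qed.
Lemma eWP (i : 'I_(t.+3)) (j : 'I_(t.+1)) : eG t (inr j) (inl i) = (i == 0 :> nat). Proof. by []. Qed.
Lemma eWW (i j : 'I_(t.+1)) : eG t (inr i) (inr j) = false. Proof. by []. Qed.
Lemma gPl (a b : 'I_(t.+3)) : (gG (inl a) == inl b :> VG t) =
  ((a == 0 :> nat) || (a == t.+2 :> nat)) && (b == t.+2 :> nat).
Proof.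
have Ha := ltn_ord a; have Hb := ltn_ord b; rewrite /gG.
case: ifP => H; rewrite !sE; first lia.
rewrite -val_eqE /=; lia.
Qed.
Lemma gPr (a : 'I_(t.+3)) (b : 'I_(t.+1)) : (gG (inl a) == inr b :> VG t) =
  (a == b.+1 :> nat).
Proof.
have Ha := ltn_ord a; have Hb := ltn_ord b; rewrite /gG.
case: ifP => H; rewrite !sE; last lia.
rewrite -val_eqE /= inordK; lia.
Qed.
Lemma gWl (a : 'I_(t.+1)) (b : 'I_(t.+3)) : (gG (inr a) == inl b :> VG t) = (a.+1 == b :> nat).
Proof. have Ha := ltn_ord a; rewrite /gG sEll inord_eqn //; lia. Qed.
Lemma gWr (a b : 'I_(t.+1)) : (gG (inr a) == inr b :> VG t) = false.
Proof. by rewrite /gG sE. Qed.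
End Adj.

Definition adjE := (Fll, Flr, Frl, Frr, ePP, ePW, eWP, eWW, gPl, gPr, gWl, gWr).


Ltac dsolve := rewrite ?degF /dF /dG /fibv /=; repeat (case: ifP => /= ?); lia.
Ltac hne H := rewrite ?sE -?val_eqE /= in H.

Lemma F_rigid (t : nat) (ht : 2 <= t) (s : {perm VF t}) :
  is_aut (FG t) s -> forall z, s z = z.
Proof.
move=> Ha.
have A0 : s (inl (inl ord0)) = inl (inl ord0).
  apply: (anchor Ha) => -[[[i Hi]|[i Hi]]|[[i Hi]|[i Hi]]] Hne; hne Hne; dsolve.
have B0 : s (inr (inl ord0)) = inr (inl ord0).
  apply: (anchor Ha) => -[[[i Hi]|[i Hi]]|[[i Hi]|[i Hi]]] Hne; hne Hne; dsolve.
have BP : forall k, k <= t.+2 -> forall i : 'I_(t.+3), i <= k -> s (inr (inl i)) = inr (inl i).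
  elim=> [|k IH] Hk [i Hi0] /= Hile.
  - have -> : Ordinal Hi0 = ord0 by apply: val_inj => /=; lia.
    exact: B0.
  - case: (ltnP i k.+1) => H; first by apply: IH => //; lia.
    have Hk' : k < t.+3 by lia.
    apply: (DL Ha (u := inr (inl (Ordinal Hk')))).
    + by apply: IH => //=; lia.
    + rewrite !adjE /=; lia.
    + move=> -[[[j Hj]|[j Hj]]|[[j Hj]|[j Hj]]]; rewrite !adjE /= => Hadj Hne; hne Hne;
      first [ by exfalso; lia | by left; apply: IH => //=; lia | by right; dsolve ].
have AW : forall j : 'I_(t.+1), s (inl (inr j)) = inl (inr j).
  move=> [j Hj]; have Hk : j.+1 < t.+3 by lia.
  apply: (DL Ha (u := inr (inl (Ordinal Hk)))).
  + by apply: (BP t.+2) => //=; lia.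
  + rewrite !adjE /=; lia.
  + move=> -[[[b Hb]|[b Hb]]|[[b Hb]|[b Hb]]]; rewrite !adjE /= => Hadj Hne; hne Hne;
    first [ by exfalso; lia | by left; apply: (BP t.+2) => //=; lia ].
have APm : s (inl (inl ord_max)) = inl (inl ord_max).
  apply: (DL Ha (u := inr (inl ord_max))).
  + by apply: (BP t.+2) => //=; lia.
  + rewrite !adjE /=; lia.
  + move=> -[[[b Hb]|[b Hb]]|[[b Hb]|[b Hb]]]; rewrite !adjE /= => Hadj Hne; hne Hne;
    first [ by exfalso; lia | by left; apply: (BP t.+2) => //=; lia
          | left; have -> : Ordinal Hb = ord0 by apply: val_inj => /=; lia ]; exact: A0.
have AP : forall k, k <= t.+1 -> forall i : 'I_(t.+3), i <= k -> s (inl (inl i)) = inl (inl i).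
  elim=> [|k IH] Hk [i Hi0] /= Hile.
  - have -> : Ordinal Hi0 = ord0 by apply: val_inj => /=; lia.
    exact: A0.
  - case: (ltnP i k.+1) => H; first by apply: IH => //; lia.
    have Hk' : k < t.+3 by lia.
    apply: (DL Ha (u := inl (inl (Ordinal Hk')))).
    + by apply: IH => //=; lia.
    + rewrite !adjE /=; lia.
    + move=> -[[[j Hj]|[j Hj]]|[[j Hj]|[j Hj]]]; rewrite !adjE /= => Hadj Hne; hne Hne;
      first [ by exfalso; lia | by left; apply: IH => //=; lia | by left; apply: AW
            | by left; apply: (BP t.+2) => //=; lia | by right; dsolve ].
have APall : forall i : 'I_(t.+3), s (inl (inl i)) = inl (inl i).
  move=> i; case: (ltnP i t.+2) => H; first by apply: (AP t.+1) => //; lia.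
  have -> : i = ord_max by apply: val_inj => /=; have := ltn_ord i; lia.
  exact: APm.
have BW : forall j : 'I_(t.+1), s (inr (inr j)) = inr (inr j).
  move=> [j Hj]; have Hk : j.+1 < t.+3 by lia.
  apply: (DL Ha (u := inl (inl (Ordinal Hk)))).
  + exact: APall.
  + rewrite !adjE /=; lia.
  + move=> -[[[b Hb]|[b Hb]]|[[b Hb]|[b Hb]]]; rewrite !adjE /= => Hadj Hne; hne Hne;
    first [ by exfalso; lia | by left; apply: APall ].
move=> -[[i|j]|[i|j]]; [exact: APall | exact: AW | apply: (BP t.+2) => //; have := ltn_ord i; lia | exact: BW].
Qed.


Ltac gsolve := rewrite ?degG /dG /=; repeat (case: ifP => /= ?); lia.

Lemma G_pin (t : nat) (ht : 2 <= t) (s : {perm VG t}) :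
  is_aut (eG t) s -> (forall j : 'I_(t.+1), j != ord_max -> s (inr j) = inr j) ->
  forall z, s z = z.
Proof.
move=> Ha Hfix.
have W0 : s (inr ord0) = inr ord0 by apply: Hfix; rewrite -val_eqE /=; lia.
have P0 : s (inl ord0) = inl ord0.
  apply: (DL Ha (u := inr ord0)) => //.
  move=> -[[b Hb]|[b Hb]]; rewrite !adjE /= => Hadj Hne; hne Hne; exfalso; lia.
have PP : forall k, k <= t.+2 -> forall i : 'I_(t.+3), i <= k -> s (inl i) = inl i.
  elim=> [|k IH] Hk [i Hi0] /= Hile.
  - have -> : Ordinal Hi0 = ord0 by apply: val_inj => /=; lia.
    exact: P0.
  - case: (ltnP i k.+1) => H; first by apply: IH => //; lia.
    have Hk' : k < t.+3 by lia.
    apply: (DL Ha (u := inl (Ordinal Hk'))).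
    + by apply: IH => //=; lia.
    + rewrite !adjE /=; lia.
    + move=> -[[j Hj]|[j Hj]]; rewrite !adjE /= => Hadj Hne; hne Hne;
      first [ by exfalso; lia | by left; apply: IH => //=; lia | by right; gsolve ].
have Wm : s (inr ord_max) = inr ord_max.
  apply: (DL Ha (u := inl ord0)) => //.
  move=> -[[b Hb]|[b Hb]]; rewrite !adjE /= => Hadj Hne; hne Hne.
  + by left; apply: (PP t.+2) => //=; lia.
  + by left; apply: Hfix; rewrite -val_eqE /=.
move=> -[i|j].
- by apply: (PP t.+2) => //; have := ltn_ord i; lia.
- case: (eqVneq j ord_max) => [->|H]; [exact: Wm | exact: Hfix].
Qed.

Lemma fixG (t : nat) (ht : 2 <= t) : fix_number (eG t) = t.
Proof.
pose S0 : {set VG t} := inr @: [set~ (ord_max : 'I_(t.+1))].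
apply: (@fix_number_eq _ _ t S0).
- apply/forallP => s; apply/implyP => /andP [Ha /forallP Hx].
  apply/eqP/permP => z; rewrite perm1; apply: G_pin => // j Hj.
  have := Hx (inr j); rewrite (mem_imset (f := inr)); last exact: inr_inj.
  by rewrite !inE Hj /= => /eqP.
- by rewrite card_imset ?cardsC1 ?card_ord //; move=> ? ? [].
- move=> S HS; rewrite leqNgt; apply/negP => Hlt.
  pose U := [set j : 'I_(t.+1) | inr j \notin S].
  have HU : 1 < #|U|.
    have Hpre : #|~: U| <= #|S|.
      have -> : #|~: U| = #|(@inr 'I_(t.+3) 'I_(t.+1)) @: (~: U)|.
        by rewrite card_imset //; move=> ? ? [].
      apply: subset_leq_card; apply/subsetP => x /imsetP [j]; rewrite !inE negbK => Hj ->.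
      exact: Hj.
    have := cardsC U; rewrite card_ord; lia.
  case/card_gt1P: HU => j1 [j2 [H1 H2 Hne]].
  move: H1 H2; rewrite !inE => H1 H2.
  have Ha : is_aut (eG t) (tperm (inr j1 : VG t) (inr j2)).
    by apply: twin_aut => -[z|z].
  have := forallP HS (tperm (inr j1 : VG t) (inr j2)); rewrite Ha /=.
  have -> : [forall x in S, tperm (inr j1 : VG t) (inr j2) x == x].
    apply/forallP => x; apply/implyP => Hx; rewrite tpermD //.
    + by apply/eqP => E; rewrite E Hx in H1.
    + by apply/eqP => E; rewrite E Hx in H2.
  move=> /= /eqP /permP /(_ (inr j1)); rewrite tpermL perm1 => [[E]].
  by rewrite E eqxx in Hne.
Qed.

Lemma fixF (t : nat) (ht : 2 <= t) : fix_number (FG t) = 0.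
Proof.
apply: (@fix_number_eq _ _ 0 set0) => //; last by rewrite cards0.
apply/forallP => s; apply/implyP => /andP [Ha _].
apply/eqP/permP => z; rewrite perm1; exact: F_rigid.
Qed.

Lemma simpleG (t : nat) : simple_graph (eG t).
Proof.
split.
- move=> [i|i] [j|j] //=; lia.
- by move=> [i|i] //=; lia.
Qed.

Lemma connG (t : nat) : connected_graph (eG t).
Proof.
split; first by rewrite card_sum !card_ord.
have Hs : connect_sym (eG t) by apply: sym_connect_sym; case: (simpleG t).
have H0 : forall x, connect (eG t) (inl ord0) x.
  move=> [[i Hi]|j].
  - elim: i Hi => [|i IH] Hi.
    + by have -> : Ordinal Hi = ord0 by apply: val_inj.
    + have Hi' : i < t.+3 by lia.
      apply: connect_trans (IH Hi') _; apply: connect1; rewrite /= ; lia.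
  - by apply: connect1.
move=> x y; apply: connect_trans (H0 y); rewrite Hs; exact: H0.
Qed.

Theorem lemma2p9 (t : nat) (ht : 2 <= t) :
  exists (T : finType) (e : rel T) (g : T -> T),
    simple_graph e /\ connected_graph e /\
    fix_number e = fix_number (functigraph e g) + t.
Proof.
exists (VG t), (eG t), (@gG t); split; first exact: simpleG.
split; first exact: connG.
by rewrite fixG // -/(FG t) fixF.
Qed.
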